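(* Let $A,B$ be unital $k$-algebras and $f:B\to A$ a unital algebra homomorphism. The modulation $A_f$ is an invertible morphism in $\mathsf{Alg}$ (i.e. a Morita equivalence between $A$ and $B$: there is a biunital $(B,A)$-bimodule $Y$ with $A_f\otimes_B Y\cong A$ as $(A,A)$-bimodules and $Y\otimes_A A_f\cong B$ as $(B,B)$-bimodules) if and only if $f$ is an algebra isomorphism.
   Context: $k$ is a commutative ring; all algebras are unital $k$-algebras. The category $\mathsf{Alg}$ has unital $k$-algebras as objects and, as morphisms to $A$ from $B$, isomorphism classes of biunital $(A,B)$-bimodules, composed by $X\otimes_B Y$. The modulation $A_f$ of a unital homomorphism $f:B\to A$ is the $k$-module $A$ with $(A,B)$-bimodule structure $a\cdot x\cdot b=a\,x\,f(b)$. *)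

(* Defs.v *)
From HB Require Import structures.
From mathcomp Require Import all_boot all_algebra.
Set Implicit Arguments. Unset Strict Implicit. Unset Printing Implicit Defensive.
Import GRing.Theory.
Local Open Scope ring_scope.

Record is_bimod (k : comPzRingType) (A B : algType k) (M : lmodType k)
    (l : A -> M -> M) (r : M -> B -> M) : Prop := IsBimod {
  bm_lD1 : forall a a' m, l (a + a') m = l a m + l a' m;
  bm_lD2 : forall a m m', l a (m + m') = l a m + l a m';
  bm_rD1 : forall m m' b, r (m + m') b = r m b + r m' b;
  bm_rD2 : forall m b b', r m (b + b') = r m b + r m b';
  bm_lM : forall a a' m, l (a * a') m = l a (l a' m);
  bm_rM : forall m b b', r m (b * b') = r (r m b) b';
  bm_l1 : forall m, l 1 m = m;
  bm_r1 : forall m, r m 1 = m;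
  bm_lr : forall a m b, l a (r m b) = r (l a m) b;
  bm_lZ1 : forall (c : k) a m, l (c *: a) m = c *: l a m;
  bm_lZ2 : forall (c : k) a m, l a (c *: m) = c *: l a m;
  bm_rZ1 : forall (c : k) m b, r (c *: m) b = c *: r m b;
  bm_rZ2 : forall (c : k) m b, r m (c *: b) = c *: r m b
}.

(* t : X -> Y -> Z exhibits Z as the tensor product X (x)_B Y, where rX is the
   right B-action on X and lY the left B-action on Y: t is biadditive and
   B-balanced, and universal among biadditive B-balanced maps into abelian
   groups (unique factorisation through an additive map). *)
Definition biadditive_balanced (k : comPzRingType) (B : algType k)
    (X Y : lmodType k) (M : zmodType) (rX : X -> B -> X) (lY : B -> Y -> Y)
    (g : X -> Y -> M) : Prop :=
  [/\ forall x x' y, g (x + x') y = g x y + g x' y,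
      forall x y y', g x (y + y') = g x y + g x y'
    & forall x b y, g (rX x b) y = g x (lY b y)].

Definition is_tensor (k : comPzRingType) (B : algType k)
    (X Y Z : lmodType k) (rX : X -> B -> X) (lY : B -> Y -> Y)
    (t : X -> Y -> Z) : Prop :=
  biadditive_balanced rX lY t /\
  forall (M : zmodType) (g : X -> Y -> M), biadditive_balanced rX lY g ->
    exists h : Z -> M,
      [/\ forall z z', h (z + z') = h z + h z',
          forall x y, h (t x y) = g x y
        & forall h' : Z -> M, (forall z z', h' (z + z') = h' z + h' z') ->
            (forall x y, h' (t x y) = g x y) -> forall z, h' z = h z].

(* Z lZ rZ : for an (A,B)-bimodule X and a (B,C)-bimodule Y,
   X (x)_B Y is isomorphic to the (A,C)-bimodule Z as (A,C)-bimodules, i.e.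
   Z is a tensor product X (x)_B Y with the induced (A,C)-bimodule and
   k-module structures. *)
Definition tensor_iso (k : comPzRingType) (A B C : algType k)
    (X Y Z : lmodType k)
    (lX : A -> X -> X) (rX : X -> B -> X)
    (lY : B -> Y -> Y) (rY : Y -> C -> Y)
    (lZ : A -> Z -> Z) (rZ : Z -> C -> Z) : Prop :=
  exists t : X -> Y -> Z,
    [/\ is_tensor rX lY t,
        forall a x y, t (lX a x) y = lZ a (t x y),
        forall x y c, t x (rY y c) = rZ (t x y) c
      & forall (c : k) x y, t (c *: x) y = c *: t x y].

(* The modulation A_f of f : B -> A: the k-module A with a.x.b = a x f(b). *)
Definition modL (k : comPzRingType) (A : algType k) (a x : A) : A := a * x.
Definition modR (k : comPzRingType) (A B : algType k) (f : B -> A)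
    (x : A) (b : B) : A := x * f b.

(* Main.v *)
Require Import Defs.
From HB Require Import structures.
From mathcomp Require Import all_boot all_algebra.
Local Open Scope ring_scope.
Import GRing.Theory.

Lemma fwd (k : comPzRingType) (A B : algType k)
    (f : {lrmorphism B -> A}) (Y : lmodType k) (lY : B -> Y -> Y) (rY : Y -> A -> Y) :
  is_bimod lY rY ->
  @tensor_iso k A B A A Y A
           (@modL k A) (@modR k A B f) lY rY (@modL k A) (@modL k A) ->
  @tensor_iso k B A B Y A B
           lY rY (@modL k A) (@modR k A B f) (@modL k B) (@modL k B) ->
  bijective f.
Proof.
move=> bm [t1 [[[t1D1 t1D2 t1bal] t1U] t1L t1R _]] [t2 [[[t2D1 t2D2 t2bal] t2U] t2L t2R _]].
rewrite /modL /modR in t1L t1R t1bal t2L t2R t2bal.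
set Phi := fun y => t2 y 1.
have PhiD : forall y y', Phi (y + y') = Phi y + Phi y' by move=> y y'; apply: t2D1.
have PhifB : forall y b, Phi (rY y (f b)) = Phi y * b.
  move=> y b; rewrite /Phi t2bal /modL mulr1 -[f b]mul1r t2R //.
have PhiL : forall b y, Phi (lY b y) = b * Phi y by move=> b y; rewrite /Phi t2L.
have t2Phi : forall y x, t2 y x = Phi (rY y x).
  by move=> y x; rewrite /Phi t2bal mulr1.
have gbal : biadditive_balanced rY (@modL k A) (fun y x => rY y x).
  split; [exact: (bm_rD1 bm) | exact: (bm_rD2 bm) | ].
  by move=> y a x; rewrite /modL (bm_rM bm).
have [h [hD ht _]] := t2U _ _ gbal.
have hPhi : forall y, h (Phi y) = y by move=> y; rewrite /Phi ht (bm_r1 bm).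
have t2bal' : biadditive_balanced rY (@modL k A) t2 by split.
have [h0 [_ _ hU]] := t2U _ _ t2bal'.
have Phih : forall z, Phi (h z) = z.
  move=> z.
  have E1 : Phi (h z) = h0 z.
    apply: (hU (fun z => Phi (h z))) => [z1 z2|y x]; first by rewrite hD PhiD.
    by rewrite ht -t2Phi.
  have E2 : z = h0 z by apply: (hU id).
  by rewrite E1 -E2.
set e := h 1.
have Phie : Phi e = 1 by rewrite Phih.
have Phi_inj : forall y y', Phi y = Phi y' -> y = y'.
  by move=> y y' E; rewrite -(hPhi y) E hPhi.
have yE : forall y, y = rY e (f (Phi y)).
  by move=> y; apply: Phi_inj; rewrite PhifB Phie mul1r.
have bE : forall b, lY b e = rY e (f b).
  by move=> b; apply: Phi_inj; rewrite PhifB PhiL Phie mulr1 mul1r.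
set u := t1 1 e.
have uc : forall b, u * f b = f b * u.
  move=> b; rewrite /u -t1R -bE -t1bal mul1r -[f b]mulr1 t1L mulr1 //.
have t1E : forall x y, t1 x y = x * u * f (Phi y).
  move=> x y; rewrite -[x in t1 x]mulr1 t1L {1}(yE y) t1R mulrA //.
have gbal1 : biadditive_balanced (@modR k A B f) lY (fun x y => x * f (Phi y)).
  split.
  - by move=> x x' y; rewrite mulrDl.
  - by move=> x y y'; rewrite PhiD rmorphD mulrDr.
  - by move=> x b y; rewrite /modR PhiL rmorphM mulrA.
have [h1 [h1D h1t _]] := t1U _ _ gbal1.
have t1bal' : biadditive_balanced (@modR k A B f) lY t1 by split.
have [h2 [_ _ h2U]] := t1U _ _ t1bal'.
have zE : forall z, z = h1 z * u.
  move=> z.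
  have E1 : h1 z * u = h2 z.
    apply: (h2U (fun z => h1 z * u)) => [z1 z2|x y]; first by rewrite h1D mulrDl.
    by rewrite h1t t1E -mulrA uc mulrA.
  have E2 : z = h2 z by apply: (h2U id).
  by rewrite E1 -E2.
have vu : h1 1 * u = 1 by rewrite -zE.
have ucan : forall a a', u * a = u * a' -> a = a'.
  by move=> a a' E; rewrite -[a]mul1r -vu -mulrA E mulrA vu mul1r.
exists (fun a => Phi (rY e a)).
- by move=> b; rewrite PhifB Phie mul1r.
- move=> a; apply: ucan.
  have := t1E 1 (rY e a); rewrite t1R mul1r -/u => <- //.
Qed.

Lemma bwd (k : comPzRingType) (A B : algType k)
    (f : {lrmorphism B -> A}) : bijective f ->
  exists (Y : lmodType k) (lY : B -> Y -> Y) (rY : Y -> A -> Y),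
     [/\ is_bimod lY rY,
         @tensor_iso k A B A A Y A
           (@modL k A) (@modR k A B f) lY rY (@modL k A) (@modL k A)
       & @tensor_iso k B A B Y A B
           lY rY (@modL k A) (@modR k A B f) (@modL k B) (@modL k B)].
Proof.
case=> g fg gf.
have ginj : forall z w, f w = z -> g z = w by move=> z w <-; rewrite fg.
have gD : forall z z', g (z + z') = g z + g z'.
  by move=> z z'; apply: ginj; rewrite raddfD /= !gf.
have gM : forall z z', g (z * z') = g z * g z'.
  by move=> z z'; apply: ginj; rewrite rmorphM /= !gf.
have gZ : forall (c : k) z, g (c *: z) = c *: g z.
  by move=> c z; apply: ginj; rewrite linearZ /=; congr (_ *: _); apply: gf.
exists A, (fun b y => f b * y), (fun y a => y * a); split.
- split=> *.
  + by rewrite rmorphD mulrDl.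
  + by rewrite mulrDr.
  + by rewrite mulrDl.
  + by rewrite mulrDr.
  + by rewrite rmorphM mulrA.
  + by rewrite mulrA.
  + by rewrite rmorph1 mul1r.
  + by rewrite mulr1.
  + by rewrite mulrA.
  + by rewrite linearZ scalerAl.
  + by rewrite scalerAr.
  + by rewrite scalerAl.
  + by rewrite scalerAr.
- exists (fun x y => x * y); split.
  + split.
    * split; [by move=> *; rewrite mulrDl | by move=> *; rewrite mulrDr |].
      by move=> x b y; rewrite /modR mulrA.
    * move=> M gg [_ ggD ggb]; exists (fun z => gg 1 z); split.
      - by move=> z z'; rewrite ggD.
      - by move=> x y; rewrite -(gf x) -ggb /modR mul1r.
      - by move=> h' _ E z; rewrite -E mul1r.
  + by move=> a x y; rewrite /modL mulrA.
  + by move=> x y c; rewrite /modL mulrA.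
  + by move=> c x y; rewrite scalerAl.
- exists (fun y x => g (y * x)); split.
  + split.
    * split; [by move=> *; rewrite mulrDl gD | by move=> *; rewrite mulrDr gD |].
      by move=> x b y; rewrite /modL mulrA.
    * move=> M gg [_ ggD ggb]; exists (fun z => gg 1 (f z)); split.
      - by move=> z z'; rewrite rmorphD ggD.
      - by move=> x y; rewrite gf -ggb mul1r.
      - by move=> h' _ E z; rewrite -E mul1r fg.
  + by move=> a x y; rewrite /modL -mulrA gM fg.
  + by move=> x y c; rewrite /modL /modR mulrA gM fg.
  + by move=> c x y; rewrite -scalerAl gZ.
Qed.

Theorem lemma2p3 (k : comPzRingType) (A B : algType k)
    (f : {lrmorphism B -> A}) :
  (exists (Y : lmodType k) (lY : B -> Y -> Y) (rY : Y -> A -> Y),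
     [/\ is_bimod lY rY,
         (* A_f (x)_B Y ~= A as (A,A)-bimodules *)
         @tensor_iso k A B A A Y A
           (@modL k A) (@modR k A B f) lY rY (@modL k A) (@modL k A)
       & (* Y (x)_A A_f ~= B as (B,B)-bimodules *)
         @tensor_iso k B A B Y A B
           lY rY (@modL k A) (@modR k A B f) (@modL k B) (@modL k B)]) <->
  bijective f.
Proof.
split; last exact: (@bwd _ _ _ f).
by case=> Y [lY [rY [H1 H2 H3]]]; exact: (@fwd _ _ _ _ _ _ _ H1 H2 H3).
Qed.
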